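(* Let $0 < \gamma \le 1/2$, let $(x,z)$ be an optimal extreme point solution of LP-CVRP-MD, let $\delta$ be defined by $\sum_{r \in R}\sum_{v \in C} 2\,c(v,r)\,z^r_{v,v} = (1-\delta)\,\mathrm{opt}_{LP}$, and let $\mathcal P$ be the random collection of paths produced by the sampling procedure described in the context. Then $\mathbb E\left[\sum_{P \in \mathcal P} c(P)\right] \le \gamma\,(1+\delta)\,\mathrm{opt}_{LP}$.
   Context: Problem: nonempty disjoint finite sets $C$ (clients) and $R$ (depots), $V = C\cup R$, a metric $c$ on $V$, integer capacity $k \ge 3$; it is assumed $c(v,R) := \min_{r\in R} c(v,r) > 0$ for every client $v$. Work in the complete bidirected graph on $V$ (directed edges $(a,b)$ of cost $c(a,b)$); for a vector $y$ on directed edges and $S\subseteq V$, $y(\delta^{in}(S))$, $y(\delta^{out}(S))$ are sums over edges entering/leaving $S$. LP-CVRP-MD has variables $x^r_{v,e}\ge 0$ ($r\in R$, $v\in C$, $e$ a directed edge) and $z^r_{v,u}\ge0$ ($r\in R$, $v\in C$, $u\in V$), objective: minimize $\sum_{r,v,e} c(e)x^r_{v,e}$, constraints: (1) $x^r_v(\delta^{out}(u))$ is $2z^r_{v,v}$ if $u=r$, $0$ if $u=v$, $z^r_{v,u}$ otherwise; (2) $x^r_v(\delta^{in}(u))$ is $0$ if $u=r$, $2z^r_{v,v}$ if $u=v$, $z^r_{v,u}$ otherwise (for all $r\in R,v\in C,u\in V$); (3) $x^r_v(\delta^{in}(S))\ge z^r_{v,u}$ whenever $u\in S\subseteq V\setminus\{r\}$;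 (4) $\sum_{r\in R}\sum_{v\in C} z^r_{v,u}=1$ for all $u\in C$; (5) $z^r_{v,u}\le z^r_{v,v}$ for $u,v\in C$; (6) $z^r_{v,u}=0$ if $u,v\in C$ and $c(u,r)>c(v,r)$; (7) $\sum_{u\in C}z^r_{v,u}\le k z^r_{v,v}$. $\mathrm{opt}_{LP}$ is its optimum value. An $r$-branching is a tree rooted at $r$ oriented away from $r$ (not necessarily spanning). Sampling procedure: for each $r\in R$, $v\in C$, take $r$-branchings $B_1,B_2,\dots$ (finitely many) with weights $\mu_i\ge 0$, $\sum_i\mu_i = K_{r,v} := 2\gamma z^r_{v,v}$, such that every directed edge $e$ lies in branchings of total weight at most $\gamma x^r_{v,e}$, $v$ lies on every $B_i$, and every client $u\ne v$ lies in branchings of total weight at least $\gamma z^r_{v,u}$ (such a decomposition exists by a theorem of Bang-Jensen, Frank and Jackson applied to the preflow $\gamma x^r_v$). Independently include each $B_i$ with probability $\mu_i$. For each included branching $B$, form an $r$–$v$ path $P(B)$ by adding the reverse of every edge of $B$ not on the $r$–$v$ path of $B$ and shortcutting the resulting Eulerian $r$–$v$ walk past repeated vertices. Then, while some client lies on two of these paths, remove it from one of them (by shortcutting past it, or truncating the path just before it if it is the last vertex), and discard paths containing no client. $\mathcal P$ is the resulting collection of paths; $c(P)$ is the total edge cost of a path $P$. *)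

(* Defs.v *)
From HB Require Import structures.
From mathcomp Require Import all_boot all_order all_algebra.
Set Implicit Arguments. Unset Strict Implicit. Unset Printing Implicit Defensive.
Import Order.TTheory GRing.Theory Num.Theory.
Local Open Scope ring_scope.

(* Vertex set V = C + R : clients are [inl v], depots are [inr r]. *)
Notation vtx Cl Dp := (Cl + Dp)%type.

Definition is_client (Cl Dp : finType) (w : vtx Cl Dp) : bool :=
  if w is inl _ then true else false.

Definition is_metric (T : finType) (F : realFieldType) (c : T -> T -> F) : Prop :=
  (forall a b, 0 <= c a b) /\ (forall a b, c a b = 0 <-> a = b) /\
  (forall a b, c a b = c b a) /\ (forall a b d, c a d <= c a b + c b d).

Definition out_sum (T : finType) (F : realFieldType) (y : T * T -> F) (u : T) : F :=
  \sum_(w : T | w != u) y (u, w).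
Definition in_sum (T : finType) (F : realFieldType) (y : T * T -> F) (u : T) : F :=
  \sum_(w : T | w != u) y (w, u).
Definition cut_in (T : finType) (F : realFieldType) (y : T * T -> F) (S : {set T}) : F :=
  \sum_(e : T * T | (e.1 \notin S) && (e.2 \in S)) y e.

(* LP-CVRP-MD.  Variables x^r_{v,e} = x r v e (e a directed edge; the loop
   coordinates (a,a) are not edges and are fixed to 0), z^r_{v,u} = z r v u. *)
Definition lp_feasible (Cl Dp : finType) (F : realFieldType)
  (c : vtx Cl Dp -> vtx Cl Dp -> F) (k : nat)
  (x : Dp -> Cl -> vtx Cl Dp * vtx Cl Dp -> F) (z : Dp -> Cl -> vtx Cl Dp -> F) : Prop :=
  (forall r v e, 0 <= x r v e) /\
  (forall r v u, 0 <= z r v u) /\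
  (forall r v a, x r v (a, a) = 0) /\
  (forall r v u, out_sum (x r v) u =
     if u == inr r then 2 * z r v (inl v) else if u == inl v then 0 else z r v u) /\
  (forall r v u, in_sum (x r v) u =
     if u == inr r then 0 else if u == inl v then 2 * z r v (inl v) else z r v u) /\
  (forall r v (S : {set vtx Cl Dp}) u, u \in S -> inr r \notin S ->
     z r v u <= cut_in (x r v) S) /\
  (forall u : Cl, \sum_(r : Dp) \sum_(v : Cl) z r v (inl u) = 1) /\
  (forall r v (u : Cl), z r v (inl u) <= z r v (inl v)) /\
  (forall r v (u : Cl), c (inl v) (inr r) < c (inl u) (inr r) -> z r v (inl u) = 0) /\
  (forall r v, \sum_(u : Cl) z r v (inl u) <= k%:R * z r v (inl v)).

Definition lp_obj (Cl Dp : finType) (F : realFieldType)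
  (c : vtx Cl Dp -> vtx Cl Dp -> F)
  (x : Dp -> Cl -> vtx Cl Dp * vtx Cl Dp -> F) : F :=
  \sum_(r : Dp) \sum_(v : Cl) \sum_(e : vtx Cl Dp * vtx Cl Dp | e.1 != e.2)
     c e.1 e.2 * x r v e.

Definition lp_optimal (Cl Dp : finType) (F : realFieldType)
  (c : vtx Cl Dp -> vtx Cl Dp -> F) (k : nat)
  (x : Dp -> Cl -> vtx Cl Dp * vtx Cl Dp -> F) (z : Dp -> Cl -> vtx Cl Dp -> F) : Prop :=
  lp_feasible c k x z /\
  forall x' z', lp_feasible c k x' z' -> lp_obj c x <= lp_obj c x'.

Definition lp_extreme (Cl Dp : finType) (F : realFieldType)
  (c : vtx Cl Dp -> vtx Cl Dp -> F) (k : nat)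
  (x : Dp -> Cl -> vtx Cl Dp * vtx Cl Dp -> F) (z : Dp -> Cl -> vtx Cl Dp -> F) : Prop :=
  lp_feasible c k x z /\
  forall x1 z1 x2 z2 (t : F),
    lp_feasible c k x1 z1 -> lp_feasible c k x2 z2 -> 0 < t < 1 ->
    (forall r v e, x r v e = t * x1 r v e + (1 - t) * x2 r v e) ->
    (forall r v u, z r v u = t * z1 r v u + (1 - t) * z2 r v u) ->
    (forall r v e, x1 r v e = x2 r v e) /\ (forall r v u, z1 r v u = z2 r v u).

Definition edge_rel (T : finType) (E : {set T * T}) : rel T := fun a b => (a, b) \in E.

Definition bvert (T : finType) (r : T) (E : {set T * T}) : {set T} :=
  r |: ([set e.1 | e in E] :|: [set e.2 | e in E]).

(* E is an r-branching: a tree containing r, oriented away from r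
   (no loops, r has in-degree 0, other vertices in-degree 1, all reachable from r) *)
Definition is_branching (T : finType) (r : T) (E : {set T * T}) : Prop :=
  (forall e, e \in E -> e.1 != e.2) /\
  (forall e, e \in E -> e.2 != r) /\
  (forall e1 e2, e1 \in E -> e2 \in E -> e1.2 = e2.2 -> e1 = e2) /\
  (forall w, w \in bvert r E -> connect (edge_rel E) r w).

(* edges of the r-v path of the branching E *)
Definition bpath_edges (T : finType) (v : T) (E : {set T * T}) : {set T * T} :=
  [set e in E | connect (edge_rel E) e.2 v].

Definition bwalk_edges (T : finType) (v : T) (E : {set T * T}) : seq (T * T) :=
  enum E ++ [seq (e.2, e.1) | e <- enum (E :\: bpath_edges v E)].

(* p is P(B): obtained from an Eulerian r-v walk r :: s of the multigraph
   bwalk_edges by shortcutting past repeated vertices (keeping r first and v last) *)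
Definition is_PB (T : finType) (r v : T) (E : {set T * T}) (p : seq T) : Prop :=
  exists s : seq T,
    [/\ last r s = v, perm_eq (zip (r :: s) s) (bwalk_edges v E),
        subseq p (r :: s), uniq p & {subset r :: s <= p}] /\
    head r p = r /\ last r p = v.

Definition pcost (T : finType) (F : realFieldType) (c : T -> T -> F) (p : seq T) : F :=
  \sum_(e <- zip p (behead p)) c e.1 e.2.

(* one removal step: a client u lies on paths i <> j; remove it from path i
   (shortcutting past it, or truncating if it is the last vertex) *)
Definition rm_step (Cl Dp : finType) (Q Q' : seq (seq (vtx Cl Dp))) : Prop :=
  exists (u : Cl) (i j : nat),
    [/\ (i < size Q)%N, (j < size Q)%N, i != j,
        inl u \in nth [::] Q i & inl u \in nth [::] Q j] /\
    Q' = set_nth [::] Q i (rem (inl u) (nth [::] Q i)).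

Inductive rm_reach (Cl Dp : finType) : seq (seq (vtx Cl Dp)) -> seq (seq (vtx Cl Dp)) -> Prop :=
| rm_refl Q : rm_reach Q Q
| rm_next Q Q' Q'' : rm_step Q Q' -> rm_reach Q' Q'' -> rm_reach Q Q''.

Definition no_shared_client (Cl Dp : finType) (Q : seq (seq (vtx Cl Dp))) : Prop :=
  forall (u : Cl) (i j : nat), (i < size Q)%N -> (j < size Q)%N ->
    inl u \in nth [::] Q i -> inl u \in nth [::] Q j -> i = j.

Definition final_coll (Cl Dp : finType) (Q0 Qf : seq (seq (vtx Cl Dp))) : Prop :=
  exists Q, rm_reach Q0 Q /\ no_shared_client Q /\
            Qf = [seq p <- Q | has (@is_client Cl Dp) p].

(* The branching family: indexed by a finite type I; branching i belongs to the
   pair own i = (r, v), is the edge set B i, and has weight mu i. *)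
Definition valid_decomp (Cl Dp : finType) (F : realFieldType) (gamma : F)
  (x : Dp -> Cl -> vtx Cl Dp * vtx Cl Dp -> F) (z : Dp -> Cl -> vtx Cl Dp -> F)
  (I : finType) (own : I -> Dp * Cl) (B : I -> {set vtx Cl Dp * vtx Cl Dp})
  (mu : I -> F) : Prop :=
  (forall i, is_branching (inr (own i).1) (B i)) /\
  (forall i, 0 <= mu i) /\
  (forall i, inl (own i).2 \in bvert (inr (own i).1) (B i)) /\
  (forall r v, \sum_(i | own i == (r, v)) mu i = 2 * gamma * z r v (inl v)) /\
  (forall r v e, \sum_(i | (own i == (r, v)) && (e \in B i)) mu i <= gamma * x r v e) /\
  (forall r v (u : Cl), u != v ->
     gamma * z r v (inl u)
       <= \sum_(i | (own i == (r, v)) && (inl u \in bvert (inr r) (B i))) mu i).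

Definition sample_result (Cl Dp : finType) (I : finType) (own : I -> Dp * Cl)
  (B : I -> {set vtx Cl Dp * vtx Cl Dp}) (w : {set I}) (Qf : seq (seq (vtx Cl Dp))) : Prop :=
  exists Pth : I -> seq (vtx Cl Dp),
    (forall i, i \in w -> is_PB (inr (own i).1) (inl (own i).2) (B i) (Pth i)) /\
    final_coll [seq Pth i | i <- enum w] Qf.

(* probability that exactly the branchings in w are included (independent choices) *)
Definition prob_out (I : finType) (F : realFieldType) (mu : I -> F) (w : {set I}) : F :=
  (\prod_(i in w) mu i) * \prod_(i in ~: w) (1 - mu i).

Definition expected_cost (Cl Dp : finType) (F : realFieldType)
  (c : vtx Cl Dp -> vtx Cl Dp -> F) (I : finType) (mu : I -> F)
  (Fin : {set I} -> seq (seq (vtx Cl Dp))) : F :=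
  \sum_(w : {set I}) prob_out mu w * \sum_(p <- Fin w) pcost c p.

(* Main.v *)
Require Import Defs.
From HB Require Import structures.
From mathcomp Require Import all_boot all_order all_algebra.
From mathcomp Require Import ring lra.
Import Order.TTheory GRing.Theory Num.Theory.
Local Open Scope ring_scope.
Set Implicit Arguments. Unset Strict Implicit. Unset Printing Implicit Defensive.

Lemma pcost_nil (T : finType) (F : realFieldType) (c : T -> T -> F) : pcost c [::] = 0.
Proof. by rewrite /pcost big_nil. Qed.
Lemma pcost_1 (T : finType) (F : realFieldType) (c : T -> T -> F) x : pcost c [:: x] = 0.
Proof. by rewrite /pcost big_nil. Qed.
Lemma pcost_cons2 (T : finType) (F : realFieldType) (c : T -> T -> F) x y p :
  pcost c (x :: y :: p) = c x y + pcost c (y :: p).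
Proof. by rewrite /pcost /= big_cons. Qed.
Lemma pcost_ge0 (T : finType) (F : realFieldType) (c : T -> T -> F) p :
  (forall a b, 0 <= c a b) -> 0 <= pcost c p.
Proof. by move=> h; rewrite /pcost; apply: sumr_ge0 => e _. Qed.

Lemma pcost_sub (T : finType) (F : realFieldType) (c : T -> T -> F) :
  (forall a b, 0 <= c a b) -> (forall a b d, c a d <= c a b + c b d) ->
  forall q x p, subseq p q -> last x p = last x q -> pcost c (x :: p) <= pcost c (x :: q).
Proof.
move=> h0 ht; elim=> [|y q IH] x p.
  by case: p.
case: p => [|a p]; first by move=> _ _; rewrite pcost_1 pcost_ge0.
rewrite /= => hs hl.
case: eqP hs hl => [<- hs hl|ne hs hl].
  by rewrite !pcost_cons2 lerD2l; apply: IH.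
rewrite pcost_cons2 (pcost_cons2 c x y).
apply: le_trans (_ : c x y + c y a + pcost c (a :: p) <= _).
  by rewrite lerD2r.
rewrite -addrA lerD2l -pcost_cons2; apply: IH => //.
Qed.

Lemma pcost_rem_aux (T : finType) (F : realFieldType) (c : T -> T -> F) u :
  (forall a b, 0 <= c a b) -> (forall a b d, c a d <= c a b + c b d) ->
  forall q x, pcost c (x :: rem u q) <= pcost c (x :: q).
Proof.
move=> h0 ht; elim=> [|y q IH] x //=.
case: eqP => [_|_].
  case: q {IH} => [|h q]; first by rewrite pcost_1 pcost_cons2 pcost_1 addr0.
  rewrite !pcost_cons2 addrA lerD2r; exact: ht.
by rewrite !pcost_cons2 lerD2l.
Qed.

Lemma pcost_rem (T : finType) (F : realFieldType) (c : T -> T -> F) u :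
  (forall a b, 0 <= c a b) -> (forall a b d, c a d <= c a b + c b d) ->
  forall q, pcost c (rem u q) <= pcost c q.
Proof.
move=> h0 ht [|y q] //=; case: eqP => _; last exact: pcost_rem_aux.
case: q => [|h q]; first by rewrite pcost_1 pcost_nil.
by rewrite pcost_cons2 lerDr.
Qed.

Lemma sum_set_nth (T : Type) (F : realFieldType) (f : T -> F) (d : T) Q i y :
  (i < size Q)%N -> f y <= f (nth d Q i) ->
  \sum_(p <- set_nth d Q i y) f p <= \sum_(p <- Q) f p.
Proof.
elim: Q i => [|a Q IH] [|i] //= hi hf; rewrite !big_cons.
  by rewrite lerD2r.
by rewrite lerD2l; apply: IH.
Qed.

Lemma rm_reach_le (Cl Dp : finType) (F : realFieldType) (c : vtx Cl Dp -> vtx Cl Dp -> F) :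
  (forall a b, 0 <= c a b) -> (forall a b d, c a d <= c a b + c b d) ->
  forall Q0 Q, rm_reach Q0 Q -> \sum_(p <- Q) pcost c p <= \sum_(p <- Q0) pcost c p.
Proof.
move=> h0 ht Q0 Q; elim=> // Q1 Q2 Q3 [u [i [j [[hi _ _ _ _] ->]]]] _ IH.
apply: le_trans IH _; apply: sum_set_nth => //; exact: pcost_rem.
Qed.

Lemma final_le (Cl Dp : finType) (F : realFieldType) (c : vtx Cl Dp -> vtx Cl Dp -> F) :
  (forall a b, 0 <= c a b) -> (forall a b d, c a d <= c a b + c b d) ->
  forall Q0 Qf, final_coll Q0 Qf -> \sum_(p <- Qf) pcost c p <= \sum_(p <- Q0) pcost c p.
Proof.
move=> h0 ht Q0 Qf [Q [hr [_ ->]]]; apply: le_trans (rm_reach_le h0 ht hr).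
rewrite big_filter [X in _ <= X](bigID (has (@is_client Cl Dp))) /= lerDl.
by apply: sumr_ge0 => p _; apply: pcost_ge0.
Qed.

Lemma zip_edges (T : finType) (E : {set T * T}) x p :
  path (edge_rel E) x p -> forall e, e \in zip (x :: p) p ->
  (e \in E) /\ connect (edge_rel E) e.2 (last x p).
Proof.
elim: p x => [|y p IH] x //= /andP [hxy hp] e.
rewrite in_cons => /orP [/eqP -> | he]; last exact: IH.
split=> //=; apply/connectP; by exists p.
Qed.

Lemma tri_path (T : finType) (F : realFieldType) (c : T -> T -> F) :
  (forall a, c a a = 0) -> (forall a b d, c a d <= c a b + c b d) ->
  forall p x, c x (last x p) <= pcost c (x :: p).
Proof.
move=> h0 ht; elim=> [|y p IH] x /=; first by rewrite h0 pcost_1.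
rewrite pcost_cons2; apply: le_trans (ht x y _) _; by rewrite lerD2l.
Qed.

Lemma path_cost (T : finType) (F : realFieldType) (c : T -> T -> F) (E : {set T * T}) r v :
  (forall a b, 0 <= c a b) -> (forall a, c a a = 0) -> (forall a b d, c a d <= c a b + c b d) ->
  connect (edge_rel E) r v -> c r v <= \sum_(e in bpath_edges v E) c e.1 e.2.
Proof.
move=> h0 hd ht /connectP [p0 hp ->]; case/shortenP: hp => p hp hu _.
apply: le_trans (tri_path hd ht p r) _.
rewrite /pcost /= big_uniq /=; last first.
  apply: (@map_uniq _ _ snd); rewrite -/(unzip2 _) unzip2_zip //; by case/andP: hu.
rewrite [X in _ <= X]big_mkcond [X in X <= _]big_mkcond /=.
apply: ler_sum => e _; case: ifP => he; last by case: ifP.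
have [h1 h2] := zip_edges hp he.
by rewrite /bpath_edges inE h1 h2.
Qed.

Lemma PB_bound (T : finType) (F : realFieldType) (c : T -> T -> F) (E : {set T * T}) r v p :
  (forall a b, 0 <= c a b) -> (forall a, c a a = 0) -> (forall a b, c a b = c b a) ->
  (forall a b d, c a d <= c a b + c b d) ->
  connect (edge_rel E) r v -> is_PB r v E p ->
  pcost c p <= 2 * \sum_(e in E) c e.1 e.2 - c r v.
Proof.
move=> h0 hd hs ht hc [s [[hl hperm hsub _ _] [hh hlp]]].
have step1 : pcost c p <= pcost c (r :: s).
  case: p hsub hh hlp => [|a p'] hsub hh hlp; first by rewrite pcost_nil pcost_ge0.
  simpl in hh; subst a; rewrite /= eqxx in hsub.
  by apply: pcost_sub => //; rewrite hl -hlp.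
set P := bpath_edges v E.
have step2 : pcost c (r :: s) = \sum_(e in E) c e.1 e.2 + \sum_(e in E :\: P) c e.1 e.2.
  rewrite /pcost /= (perm_big _ hperm) /bwalk_edges big_cat /= big_map !big_enum /=.
  by congr (_ + _); apply: eq_bigr => e _; apply: hs.
have step3 : \sum_(e in E) c e.1 e.2 = \sum_(e in P) c e.1 e.2 + \sum_(e in E :\: P) c e.1 e.2.
  rewrite (big_setID P); congr (_ + _); apply: eq_bigl => e.
  have /setIidPr -> // : P \subset E.
  by apply/subsetP => e'; rewrite inE => /andP [].
have := path_cost h0 hd ht hc; rewrite -/P => h4.
lra.
Qed.

Lemma expand_prod (I : finType) (F : realFieldType) (a b : I -> F) :
  \sum_(w : {set I}) (\prod_(j in w) a j) * \prod_(j in ~: w) b j = \prod_j (a j + b j).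
Proof.
rewrite bigA_distr; apply: eq_big => // w _.
symmetry; rewrite (bigID (mem w)) /=; congr (_ * _); apply: eq_big => j; rewrite ?inE //.
  by move=> ->.
by move=> /negbTE ->.
Qed.

Lemma marginal (I : finType) (F : realFieldType) (mu : I -> F) i :
  \sum_(w : {set I}) prob_out mu w * (if i \in w then 1 else 0) = mu i.
Proof.
pose b j := if j == i then 0 else 1 - mu j.
transitivity (\prod_j (mu j + b j)); last first.
  rewrite (bigD1 i) //= /b eqxx addr0 big1 ?mulr1 // => j /negbTE ->.
  by rewrite addrC subrK.
rewrite -expand_prod; apply: eq_bigr => w _; rewrite /prob_out.
case: ifP => hi.
  rewrite mulr1; congr (_ * _); apply: eq_bigr => j; rewrite inE /b.
  by case: eqP => // -> ; rewrite hi.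
rewrite mulr0 [X in _ * X](bigD1 i) ?inE ?hi //= /b eqxx mul0r mulr0 //.
Qed.

Lemma expect_lin (I : finType) (F : realFieldType) (mu : I -> F) (a : I -> F) :
  \sum_(w : {set I}) prob_out mu w * \sum_(j in w) a j = \sum_j mu j * a j.
Proof.
transitivity (\sum_(w : {set I}) \sum_j prob_out mu w * (if j \in w then 1 else 0) * a j).
  apply: eq_bigr => w _; rewrite big_mkcond mulr_sumr; apply: eq_bigr => j _.
  by case: ifP; rewrite ?mulr1 ?mulr0 ?mul0r.
rewrite exchange_big; apply: eq_bigr => j _; rewrite -mulr_suml marginal //.
Qed.

Lemma prob_ge0 (I : finType) (F : realFieldType) (mu : I -> F) w :
  (forall i, 0 <= mu i <= 1) -> 0 <= prob_out mu w.
Proof.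
move=> h; apply: mulr_ge0; apply: prodr_ge0 => i _; have /andP[h1 h2] := h i; lra.
Qed.

Lemma le_sum1 (I : finType) (F : realFieldType) (f : I -> F) i :
  (forall j, 0 <= f j) -> f i <= \sum_j f j.
Proof. by move=> h; rewrite (bigD1 i) //= lerDl sumr_ge0. Qed.

Lemma split_own (I A B : finType) (F : realFieldType) (own : I -> A * B) (G : I -> F) :
  \sum_j G j = \sum_(r : A) \sum_(v : B) \sum_(j | own j == (r, v)) G j.
Proof.
rewrite (partition_big own xpredT) //= pair_big /=.
by apply: eq_bigr => [[r v]] _.
Qed.

Theorem lemma3 (F : realFieldType) (Cl Dp : finType)
  (c : vtx Cl Dp -> vtx Cl Dp -> F) (k : nat)
  (x : Dp -> Cl -> vtx Cl Dp * vtx Cl Dp -> F) (z : Dp -> Cl -> vtx Cl Dp -> F)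
  (gamma delta : F) (I : finType) (own : I -> Dp * Cl)
  (B : I -> {set vtx Cl Dp * vtx Cl Dp}) (mu : I -> F)
  (Fin : {set I} -> seq (seq (vtx Cl Dp))) :
  (0 < #|Cl|)%N -> (0 < #|Dp|)%N -> is_metric c -> (3 <= k)%N ->
  (forall (v : Cl) (r : Dp), 0 < c (inl v) (inr r)) ->
  0 < gamma -> gamma <= 1 / 2 ->
  lp_extreme c k x z -> lp_optimal c k x z ->
  \sum_(r : Dp) \sum_(v : Cl) 2 * c (inl v) (inr r) * z r v (inl v)
    = (1 - delta) * lp_obj c x ->
  valid_decomp gamma x z own B mu ->
  (forall w : {set I}, sample_result own B w (Fin w)) ->
  expected_cost c mu Fin <= gamma * (1 + delta) * lp_obj c x.
Proof.
move=> _ _ [h0 [hd [hsym ht]]] _ _ hg0 hg1 _ [[hx0 [hz0 [_ [_ [_ [_ [hz1 _]]]]]]] _] hdelta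
  [hbr [hmu0 [hvin [hsum [hedge _]]]]] hsamp.
have hdd : forall a, c a a = 0 by move=> a; apply/hd.
have hmu1 : forall i, 0 <= mu i <= 1.
  move=> i; rewrite hmu0 /=.
  have := hsum (own i).1 (own i).2; rewrite -surjective_pairing => hs.
  have h1 : mu i <= \sum_(j | own j == own i) mu j.
    by rewrite (bigD1 i) //= lerDl sumr_ge0.
  have h2 : z (own i).1 (own i).2 (inl (own i).2) <= 1.
    rewrite -(hz1 (own i).2).
have hr := @le_sum1 _ _ (fun r => \sum_v z r v (inl (own i).2)) (own i).1 (fun r => sumr_ge0 _ (fun v _ => hz0 r v _)).
    have hv := @le_sum1 _ _ (fun v => z (own i).1 v (inl (own i).2)) (own i).2 (fun v => hz0 _ v _).
    exact: le_trans hv hr.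
  have h3 := hz0 (own i).1 (own i).2 (inl (own i).2).
  rewrite hs in h1; nra.
pose a j := 2 * \sum_(e in B j) c e.1 e.2 - c (inr (own j).1) (inl (own j).2).
have step1 : expected_cost c mu Fin <= \sum_j mu j * a j.
  rewrite -expect_lin /expected_cost; apply: ler_sum => w _.
  apply: ler_wpM2l; first exact: prob_ge0.
  have [Pth [hPB hfin]] := hsamp w.
  apply: le_trans (final_le h0 ht hfin) _.
  rewrite big_map big_enum /=; apply: ler_sum => j hj.
  apply: PB_bound => //; last exact: hPB.
  by have [_ [_ [_ ->]]] := hbr j.
have S1 : \sum_j mu j * \sum_(e in B j) c e.1 e.2 <= gamma * lp_obj c x.
  rewrite (split_own own) /lp_obj mulr_sumr; apply: ler_sum => r _.
  rewrite mulr_sumr; apply: ler_sum => v _; rewrite mulr_sumr.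
  have -> : \sum_(j | own j == (r, v)) mu j * \sum_(e in B j) c e.1 e.2 =
      \sum_(e | e.1 != e.2) c e.1 e.2 * \sum_(j | (own j == (r, v)) && (e \in B j)) mu j.
    transitivity (\sum_(j | own j == (r, v)) \sum_(e | e.1 != e.2)
                   (if e \in B j then mu j * c e.1 e.2 else 0)).
      apply: eq_bigr => j _; rewrite mulr_sumr [LHS]big_mkcond [RHS]big_mkcond.
      apply: eq_bigr => e _ /=; case: ifP => he; last by case: ifP.
      by have [hne _] := hbr j; rewrite (hne e he).
    rewrite exchange_big; apply: eq_bigr => e _; rewrite -big_mkcondr mulr_sumr.
    by apply: eq_bigr => j _; rewrite mulrC.
  apply: ler_sum => e _; rewrite mulrCA; apply: ler_wpM2l => //; exact: hedge.
have S2 : \sum_j mu j * c (inr (own j).1) (inl (own j).2) = gamma * ((1 - delta) * lp_obj c x).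
  rewrite -hdelta (split_own own) mulr_sumr; apply: eq_bigr => r _.
  rewrite mulr_sumr; apply: eq_bigr => v _.
  rewrite (eq_bigr (fun j => mu j * c (inr r) (inl v))); last by move=> j /eqP ->.
  rewrite -mulr_suml hsum (hsym (inr r)); ring.
have E : \sum_j mu j * a j = 2 * (\sum_j mu j * \sum_(e in B j) c e.1 e.2)
           - \sum_j mu j * c (inr (own j).1) (inl (own j).2).
  rewrite mulr_sumr -sumrB; apply: eq_bigr => j _; rewrite /a; ring.
rewrite E S2 in step1.
nra.
Qed.
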